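(* Let $V=\mathbb{F}_2^s$ and let $\circ$ and $\diamond$ be two alternative operations on $V$ with $\dim W_\circ=\dim W_\diamond=s-3$, with translation groups $T_\circ$ and $T_\diamond$. Then there exists $g\in\mathrm{GL}(V)$ such that $T_\diamond=T_\circ^g$ if and only if $\dim U_\circ=\dim U_\diamond$.
   Context: An alternative operation on $V$ is defined from an elementary abelian $2$-subgroup $T<\mathrm{AGL}(V,+)$ acting regularly on $V$: with $\tau_a$ the unique element of $T$ sending $0$ to $a$ (postfix notation), $a\circ b:=a\tau_b$, and $T_\circ:=T$. It is assumed that the xor-translations $x\mapsto x+a$ lie in the normaliser of $T$ in $\mathrm{Sym}(V)$. The weak key space is $W_\circ=\{k: x\circ k=x+k\ \forall x\}$; the product is $a\cdot b=a+b+a\circ b$ and the error space is $U_\circ=\{a\cdot b: a,b\in V\}$. For $g\in\mathrm{GL}(V)$, $T^g:=gTg^{-1}$. *)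

(* Defs.v *)
From HB Require Import structures.
From mathcomp Require Import all_boot all_order all_algebra all_fingroup.
Set Implicit Arguments. Unset Strict Implicit. Unset Printing Implicit Defensive.
Import GRing.Theory.
Local Open Scope ring_scope.

(* V = F_2^s, realised as row vectors; linear maps act on the right (postfix):
   x |-> x *m A. *)
Notation vec s := 'rV['F_2]_s.

Section Defs.
Variable s : nat.
Implicit Types (T : {set {perm vec s}}) (t : {perm vec s}).

Lemma xor_inj (a : vec s) : injective (fun x : vec s => x + a).
Proof. by move=> x y /addIr. Qed.

Definition xort (a : vec s) : {perm vec s} := perm (@xor_inj a).

Definition affine t : Prop :=
  exists2 A : 'M['F_2]_s, A \in unitmx & exists b : vec s, forall x, t x = x *m A + b.

Definition regular T : Prop :=
  forall x y : vec s, exists! t, t \in T /\ t x = y.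

Definition alt_trans (T : {group {perm vec s}}) : Prop :=
  [/\ (forall t, t \in T -> affine t),
      abelian T, (forall t, t \in T -> (t ^+ 2)%g = 1%g),
      regular T &
      (forall a : vec s, xort a \in ('N(T))%g)].

Definition tau T (b : vec s) : {perm vec s} :=
  odflt 1%g [pick t in T | t 0 == b].

Definition circ T (a b : vec s) : vec s := tau T b a.

Definition Wsp T : {set vec s} := [set k | [forall x, circ T x k == x + k]].

Definition dotp T (a b : vec s) : vec s := a + b + circ T a b.

Definition Usp T : {set vec s} := [set dotp T ab.1 ab.2 | ab : vec s * vec s].

Definition dimsp (A : {set vec s}) : nat := \dim <<enum A>>%VS.

(* T^g = g T g^{-1} in postfix notation: x (g t g^{-1}) = ((x g) t) g^{-1} *)
Definition conjT (g : 'M['F_2]_s) T : {set {perm vec s}} :=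
  [set p : {perm vec s} |
     [exists t in T, [forall x, p x == t (x *m g) *m invmx g]]].

End Defs.

(* Main.v *)
Require Import Defs.
From HB Require Import structures.
From mathcomp Require Import all_boot all_order all_algebra all_fingroup.
From mathcomp Require Import ring.
Set Implicit Arguments. Unset Strict Implicit. Unset Printing Implicit Defensive.
Import GRing.Theory.
Local Open Scope ring_scope.

Lemma vaddvv s (v : vec s) : v + v = 0.
Proof. by apply/rowP => j; rewrite !mxE addrr_pchar2 // pchar_Fp. Qed.

Lemma vaddv_eq0 s (u v : vec s) : u + v = 0 -> u = v.
Proof. by move=> h; rewrite -[v]add0r -h -addrA vaddvv addr0. Qed.

Lemma tauP s (T : {group {perm vec s}}) (HT : alt_trans T) b :
  tau T b \in T /\ tau T b 0 = b.
Proof.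
case: HT => _ _ _ reg _.
rewrite /tau; case: pickP => [t /andP[tT /eqP t0] | none] //=.
have [t [[tT t0] _]] := reg 0 b.
by move: (none t); rewrite tT t0 eqxx.
Qed.

Lemma tau_uniq s (T : {group {perm vec s}}) (HT : alt_trans T) t :
  t \in T -> t = tau T (t 0).
Proof.
move=> tT; have [tauT tau0] := tauP HT (t 0).
case: (HT) => _ _ _ reg _.
have [u [_ uu]] := reg 0 (t 0).
exact: (etrans (esym (uu t (conj tT erefl))) (uu _ (conj tauT tau0))).
Qed.


Lemma vaddvK s (u v : vec s) : u + (u + v) = v.
Proof. by rewrite addrA vaddvv add0r. Qed.

Lemma tauE s (T : {group {perm vec s}}) b x :
  tau T b x = x + b + dotp T x b.
Proof. by rewrite /dotp /circ vaddvK. Qed.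

Lemma dotp_lin s (T : {group {perm vec s}}) (HT : alt_trans T) b :
  exists M : 'M['F_2]_s, forall y, dotp T y b = y *m M.
Proof.
have [tT t0] := tauP HT b.
case: (HT) => aff _ _ _ _.
have [A _ [c Hc]] := aff _ tT.
have cb : c = b by rewrite -t0 Hc mul0mx add0r.
exists (A + 1%:M) => y.
rewrite /dotp /circ Hc cb mulmxDr mulmx1 addrC -!addrA; congr (_ + _).
by rewrite addrC -addrA vaddvv addr0.
Qed.

Lemma dotpDl s (T : {group {perm vec s}}) (HT : alt_trans T) x y b :
  dotp T (x + y) b = dotp T x b + dotp T y b.
Proof. by have [M HM] := dotp_lin HT b; rewrite !HM mulmxDl. Qed.

Lemma dotp0l s (T : {group {perm vec s}}) (HT : alt_trans T) b :
  dotp T 0 b = 0.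
Proof. by have [M HM] := dotp_lin HT b; rewrite !HM mul0mx. Qed.

Lemma dotpC s (T : {group {perm vec s}}) (HT : alt_trans T) a b :
  dotp T a b = dotp T b a.
Proof.
have [taT ta0] := tauP HT a; have [tbT tb0] := tauP HT b.
case: (HT) => _ /centsP ab _ _ _.
have := congr1 (fun p : {perm vec s} => p 0) (ab _ taT _ tbT).
rewrite /= !permM ta0 tb0 => e.
by rewrite /dotp /circ e [a + b]addrC.
Qed.

Lemma dotpvv s (T : {group {perm vec s}}) (HT : alt_trans T) b :
  dotp T b b = 0.
Proof.
have [tbT tb0] := tauP HT b.
case: (HT) => _ _ ex2 _ _.
have := congr1 (fun p : {perm vec s} => p 0) (ex2 _ tbT).
rewrite /= expgS expg1 permM perm1 tb0 => e.
by rewrite /dotp /circ e vaddvv addr0.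
Qed.

Lemma tau_mul s (T : {group {perm vec s}}) (HT : alt_trans T) a b x :
  tau T (a + b + dotp T a b) x = tau T b (tau T a x).
Proof.
have [taT ta0] := tauP HT a; have [tbT tb0] := tauP HT b.
have := tau_uniq HT (groupM taT tbT).
rewrite permM ta0 tauE => <-.
by rewrite permM.
Qed.

Lemma xortE s (c x : vec s) : xort c x = x + c.
Proof. by rewrite /xort permE. Qed.

Lemma xortV s (c x : vec s) : (xort c)^-1%g x = x + c.
Proof.
have e : x = xort c (x + c) by rewrite xortE -addrA vaddvv addr0.
by rewrite {1}e permK.
Qed.

Lemma tau_norm s (T : {group {perm vec s}}) (HT : alt_trans T) b c x :
  tau T (b + dotp T c b) x = tau T b (x + c) + c.
Proof.
have [tbT tb0] := tauP HT b.
case: (HT) => _ _ _ _ nT.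
have hT : (tau T b ^ xort c)%g \in T by rewrite (memJ_norm _ (nT c)).
have hE y : (tau T b ^ xort c)%g y = tau T b (y + c) + c.
  by rewrite conjgE !permM xortV xortE.
have := tau_uniq HT hT.
rewrite hE add0r (tauE T b c) => e.
have e2 : c + b + dotp T c b + c = b + dotp T c b.
  by rewrite addrC !addrA vaddvv add0r.
by rewrite e2 in e; rewrite -e hE.
Qed.


Lemma dot_mul s (T : {group {perm vec s}}) (HT : alt_trans T) a b x :
  dotp T x (a + b + dotp T a b) = dotp T x a + dotp T x b + dotp T (dotp T x a) b.
Proof.
apply: (addrI (x + (a + b + dotp T a b))).
rewrite -tauE tau_mul // !tauE !dotpDl //.
by apply/rowP => j; rewrite !mxE; ring.
Qed.

Lemma voppv s (v : vec s) : - v = v.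
Proof. by apply: vaddv_eq0; rewrite addNr. Qed.

Lemma vaddv_sub s (u v : vec s) : u + v = u - v.
Proof. by rewrite voppv. Qed.

Lemma dot_norm s (T : {group {perm vec s}}) (HT : alt_trans T) b c x :
  dotp T x (b + dotp T c b) = dotp T x b.
Proof.
apply: (addrI (x + (b + dotp T c b))).
rewrite -tauE tau_norm // [tau T b (x + c) + c]vaddv_sub !tauE !dotpDl //.
by apply/rowP => j; rewrite !mxE; ring.
Qed.

Lemma dotp0r s (T : {group {perm vec s}}) (HT : alt_trans T) x :
  dotp T x 0 = 0.
Proof. by rewrite dotpC // dotp0l. Qed.

Lemma dot_star s (T : {group {perm vec s}}) (HT : alt_trans T) a b x :
  dotp T x (a + b) = dotp T x a + dotp T x b + dotp T (dotp T x a) b.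
Proof.
have e : dotp T a (a + b) = dotp T a b.
  by rewrite dotpC // dotpDl // dotpvv // add0r dotpC.
by rewrite -(dot_norm HT (a + b) a x) e dot_mul.
Qed.

Lemma dot_sq s (T : {group {perm vec s}}) (HT : alt_trans T) b x :
  dotp T (dotp T x b) b = 0.
Proof.
have := dot_star HT b b x.
by rewrite vaddvv dotp0r // vaddvv add0r => <-.
Qed.

Lemma dot_ann s (T : {group {perm vec s}}) (HT : alt_trans T) b c x :
  dotp T x (dotp T c b) = 0.
Proof.
have h y : dotp T y (dotp T c b) = dotp T (dotp T y b) (dotp T c b).
  apply: vaddv_eq0; apply: (addrI (dotp T y b)).
  by rewrite addr0 addrA -dot_star // dot_norm.
by rewrite h h dot_sq // dotp0l.
Qed.

Lemma dot3 s (T : {group {perm vec s}}) (HT : alt_trans T) a b x :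
  dotp T (dotp T x a) b = 0.
Proof. by rewrite dotpC // dot_ann. Qed.

Lemma dotpDr s (T : {group {perm vec s}}) (HT : alt_trans T) a b x :
  dotp T x (a + b) = dotp T x a + dotp T x b.
Proof. by rewrite dot_star // dot3 // addr0. Qed.


Lemma dimsp_img s (g : 'M['F_2]_s) (A : {set vec s}) :
  g \in unitmx -> dimsp [set u *m g | u in A] = dimsp A.
Proof.
move=> gu; rewrite /dimsp.
pose f : 'Hom(vec s, vec s) := linfun (mulmxr g).
have -> : <<enum [set u *m g | u in A]>>%VS = <<[seq f i | i <- enum A]>>%VS.
  apply: eq_span => v; rewrite mem_enum.
  apply/imsetP/mapP => [[u uA ->]|[u uA ->]]; exists u; rewrite ?mem_enum ?lfunE //.
  by move: uA; rewrite mem_enum.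
rewrite -limg_span limg_dim_eq //.
have /eqP -> : lker f == 0%VS.
  by apply/lker0P => u v; rewrite !lfunE /=; apply: (can_inj (mulmxK gu)).
by rewrite capv0.
Qed.

Lemma conj_dotp s (Tc Td : {group {perm vec s}}) (g : 'M['F_2]_s) :
  alt_trans Tc -> alt_trans Td -> g \in unitmx ->
  (Td : {set _}) = conjT g Tc ->
  forall x b, dotp Td x b = dotp Tc (x *m g) (b *m g) *m invmx g.
Proof.
move=> Hc Hd gu eT x b.
have [tT t0] := tauP Hd b.
have : tau Td b \in (Td : {set _}) by []. rewrite {2}eT inE => /existsP [t /andP [tTc /forallP ht]].
have t0' : t 0 = b *m g.
  have h0 := eqP (ht 0); rewrite t0 mul0mx in h0.
  by rewrite h0 mulmxKV.
have htx := eqP (ht x).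
rewrite (tau_uniq Hc tTc) t0' in htx.
by rewrite /dotp /circ htx tauE !mulmxDl !mulmxK //.
Qed.

Lemma fwd s (Tc Td : {group {perm vec s}}) (g : 'M['F_2]_s) :
  alt_trans Tc -> alt_trans Td -> g \in unitmx ->
  (Td : {set _}) = conjT g Tc -> dimsp (Usp Tc) = dimsp (Usp Td).
Proof.
move=> Hc Hd gu eT.
have cd := conj_dotp Hc Hd gu eT.
have -> : Usp Td = [set u *m invmx g | u in Usp Tc].
  apply/setP => v; apply/imsetP/imsetP => [[[a b] _ ->]|[u /imsetP [[a b] _ ->] ->]] /=.
    exists (dotp Tc (a *m g) (b *m g)); last by rewrite cd.
    by apply/imsetP; exists (a *m g, b *m g).
  exists (a *m invmx g, b *m invmx g) => //=.
  by rewrite cd !mulmxKV.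
by rewrite dimsp_img // unitmx_inv.
Qed.


Lemma F2_cases (c : 'F_2) : c = 0 \/ c = 1.
Proof. by case: c => [[|[|m]] Hm]; [left; apply: val_inj|right; apply: val_inj|]. Qed.

Lemma span_ind s (X : seq (vec s)) (P : vec s -> Prop) :
  P 0 -> (forall a b, P a -> P b -> P (a + b)) -> (forall x, x \in X -> P x) ->
  forall v, v \in <<X>>%VS -> P v.
Proof.
move=> P0 PD PX v.
have -> : X = in_tuple X by [].
move/coord_span => ->.
apply: big_ind => // i _.
case: (F2_cases (coord (in_tuple X) i v)) => ->; first by rewrite scale0r.
by rewrite scale1r; apply: PX; apply: mem_nth (ltn_ord i).
Qed.

Lemma dimvf_rV s : \dim (fullv : {vspace vec s}) = s.
Proof. by rewrite dimvf /dim /= mul1n. Qed.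

Definition Wv s (T : {group {perm vec s}}) : {vspace vec s} := <<enum (Wsp T)>>%VS.
Definition Uv s (T : {group {perm vec s}}) : {vspace vec s} := <<enum (Usp T)>>%VS.

Lemma inWsp s (T : {group {perm vec s}}) k :
  (k \in Wsp T) <-> (forall x, dotp T x k = 0).
Proof.
rewrite inE; split => [/forallP h x | h].
  by rewrite /dotp (eqP (h x)) vaddvv.
apply/forallP => x; apply/eqP.
by have := h x; rewrite /dotp => /vaddv_eq0 <-.
Qed.

Lemma Wv_ann s (T : {group {perm vec s}}) (HT : alt_trans T) a :
  a \in Wv T -> forall x, dotp T x a = 0.
Proof.
apply: (span_ind (P := fun a => forall x, dotp T x a = 0)).
- by move=> x; rewrite dotp0r.
- by move=> u v hu hv x; rewrite dotpDr // hu hv addr0.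
- by move=> k; rewrite mem_enum => /inWsp.
Qed.

Lemma Wv_annl s (T : {group {perm vec s}}) (HT : alt_trans T) a :
  a \in Wv T -> forall x, dotp T a x = 0.
Proof. by move=> h x; rewrite dotpC // Wv_ann. Qed.

Lemma ann_Wv s (T : {group {perm vec s}}) a :
  (forall x, dotp T x a = 0) -> a \in Wv T.
Proof. by move/inWsp => h; apply: memv_span; rewrite mem_enum. Qed.

Lemma inUv s (T : {group {perm vec s}}) a b : dotp T a b \in Uv T.
Proof. by apply: memv_span; rewrite mem_enum; apply/imsetP; exists (a, b). Qed.

Lemma Uv_sub s (T : {group {perm vec s}}) (HT : alt_trans T) : (Uv T <= Wv T)%VS.
Proof.
apply/span_subvP => u; rewrite mem_enum => /imsetP [[a b] _ ->].
by apply: ann_Wv => x; rewrite dot_ann.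
Qed.

Definition Xv s (T : {group {perm vec s}}) : {vspace vec s} := ((Wv T)^C)%VS.

Lemma gen_full s (T : {group {perm vec s}}) (y z w : vec s) :
  (Xv T <= <<[:: y; z; w]>>)%VS ->
  forall v, v \in <<[:: y; z; w] ++ enum (Wsp T)>>%VS.
Proof.
move=> hX v.
have : (fullv <= <<[:: y; z; w] ++ enum (Wsp T)>>)%VS.
  rewrite span_cat -(addv_complf (Wv T)) addvC.
  by apply: addvS.
by move/subvP; apply; apply: memvf.
Qed.

Lemma full_ind s (T : {group {perm vec s}}) (HT : alt_trans T) (y z w : vec s)
  (P : vec s -> Prop) :
  (Xv T <= <<[:: y; z; w]>>)%VS ->
  P 0 -> (forall a b, P a -> P b -> P (a + b)) ->
  P y -> P z -> P w -> (forall a, a \in Wv T -> P a) -> forall v, P v.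
Proof.
move=> hX P0 PD Py Pz Pw PW v.
apply: (span_ind P0 PD _ (gen_full hX v)) => x.
rewrite mem_cat !inE => /orP [/or3P [/eqP -> | /eqP -> | /eqP ->] // | xW].
by apply: PW; apply: memv_span.
Qed.

Lemma gen_U s (T : {group {perm vec s}}) (HT : alt_trans T) (y z w : vec s) :
  (Xv T <= <<[:: y; z; w]>>)%VS ->
  Uv T = <<[:: dotp T y w; dotp T z w; dotp T y z]>>%VS.
Proof.
move=> hX; set L := [:: _; _; _].
apply: subv_anti; apply/andP; split; last first.
  by apply/span_subvP => u; rewrite !inE => /or3P [/eqP -> | /eqP -> | /eqP ->]; apply: inUv.
apply/span_subvP => u; rewrite mem_enum => /imsetP [[a b] _ ->] /=.
have hL : forall x, x \in L -> x \in <<L>>%VS by move=> x; apply: memv_span.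
elim/(full_ind HT (y:=y) (z:=z) (w:=w)): a b => //.
- by move=> b; rewrite dotp0l // mem0v.
- by move=> a1 a2 h1 h2 b; rewrite dotpDl // memvD.
- elim/(full_ind HT (y:=y) (z:=z) (w:=w)) => //.
  + by rewrite dotp0r // mem0v.
  + by move=> b1 b2 h1 h2; rewrite dotpDr // memvD.
  + by rewrite dotpvv // mem0v.
  + by apply: hL; rewrite !inE eqxx ?orbT.
  + by apply: hL; rewrite !inE eqxx ?orbT.
  + by move=> a aW; rewrite Wv_ann // mem0v.
- elim/(full_ind HT (y:=y) (z:=z) (w:=w)) => //.
  + by rewrite dotp0r // mem0v.
  + by move=> b1 b2 h1 h2; rewrite dotpDr // memvD.
  + by rewrite dotpC //; apply: hL; rewrite !inE eqxx ?orbT.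
  + by rewrite dotpvv // mem0v.
  + by apply: hL; rewrite !inE eqxx ?orbT.
  + by move=> a aW; rewrite Wv_ann // mem0v.
- elim/(full_ind HT (y:=y) (z:=z) (w:=w)) => //.
  + by rewrite dotp0r // mem0v.
  + by move=> b1 b2 h1 h2; rewrite dotpDr // memvD.
  + by rewrite dotpC //; apply: hL; rewrite !inE eqxx ?orbT.
  + by rewrite dotpC //; apply: hL; rewrite !inE eqxx ?orbT.
  + by rewrite dotpvv // mem0v.
  + by move=> a aW; rewrite Wv_ann // mem0v.
- by move=> a aW b; rewrite Wv_annl // mem0v.
Qed.

Lemma span_mx s (X : seq (vec s)) (hs : size X = s) :
  (forall v, v \in <<X>>%VS) ->
  forall x, exists u : 'rV['F_2]_s, x = u *m \matrix_(j < s) X`_j.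
Proof.
move=> hX x.
pose tX := tcast hs (in_tuple X).
have eX : (tX : seq _) = X by rewrite val_tcast.
have := hX x; rewrite -eX => /coord_span ->.
exists (\row_j coord tX j x).
rewrite mulmx_sum_row; apply: eq_bigr => j _.
by rewrite rowK mxE.
Qed.

Definition tab (r i k : nat) : option nat :=
  match i, k with
  | 0, 2 | 2, 0 => Some 3
  | 1, 2 | 2, 1 => Some 4
  | 0, 1 | 1, 0 => if r == 3 then Some 5 else None
  | _, _ => None
  end.

Definition tabv s r (e : nat -> vec s) i k := if tab r i k is Some j then e j else 0.

Definition NFspec s (T : {group {perm vec s}}) :=
  exists e : nat -> vec s,
    [/\ forall j, (s <= j)%N -> e j = 0,
        forall x, exists u : 'rV['F_2]_s, x = u *m \matrix_(j < s) e j &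
        forall i k, dotp T (e i) (e k) = tabv (dimsp (Usp T)) e i k].

Lemma build s (T : {group {perm vec s}}) (HT : alt_trans T) (y z w : vec s)
  (L : seq (vec s)) :
  (3 <= s)%N -> dimsp (Wsp T) = (s - 3)%N ->
  (Xv T <= <<[:: y; z; w]>>)%VS ->
  Uv T = <<L>>%VS -> free L ->
  (L = [:: dotp T y w; dotp T z w; dotp T y z]) \/
  (L = [:: dotp T y w; dotp T z w] /\ dotp T y z = 0) ->
  NFspec T.
Proof.
move=> s3 dW hX hU fL hL.
set Y := (Wv T :\: Uv T)%VS.
set X := [:: y; z; w] ++ L ++ vbasis Y.
have rL : dimsp (Usp T) = size L.
  by rewrite /dimsp -/(Uv T) hU; apply/eqP.
have UW := Uv_sub HT.
have hs : size X = s.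
  have := dimv_cap_compl (Wv T) (Uv T).
  rewrite (capv_idPr UW) -/Y /Wv -/(dimsp (Wsp T)) dW.
  rewrite /dimsp -/(Uv T) hU (eqP fL) => e.
  rewrite /X !size_cat /=.
  have -> : size (vbasis Y) = \dim Y by rewrite size_tuple.
  by rewrite e subnKC.
have hspan : forall v, v \in <<X>>%VS.
  move=> v.
  have : (fullv <= <<X>>)%VS.
    rewrite /X !span_cat (span_basis (vbasisP Y)) -hU [(Uv T + Y)%VS]addvC /Y addv_diff.
    rewrite (addv_idPl UW) -(addv_complf (Wv T)) addvC.
    by apply: addvS.
  by move/subvP; apply; apply: memvf.
exists (fun j => X`_j); split.
- by move=> j hj; rewrite nth_default // hs.
- exact: span_mx hs hspan.
have hW : forall j, (3 <= j)%N -> X`_j \in Wv T.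
  move=> j hj; rewrite /X nth_cat /= ltnNge hj /=.
  case: (ltnP (j - 3) (size (L ++ vbasis Y))) => hj2; last by rewrite nth_default // mem0v.
  have := mem_nth 0 hj2; rewrite mem_cat => /orP [hx | hx].
    by apply: (subvP UW); rewrite hU; apply: memv_span.
  by apply: (subvP (diffvSl (Wv T) (Uv T))); apply: vbasis_mem.
rewrite rL.
have hWl : forall j b, (3 <= j)%N -> dotp T X`_j b = 0.
  by move=> j b hj; rewrite Wv_annl //; apply: hW.
have hWr : forall j b, (3 <= j)%N -> dotp T b X`_j = 0.
  by move=> j b hj; rewrite Wv_ann //; apply: hW.
move=> i k.
case: i => [|[|[|i]]]; last by rewrite hWl.
all: case: k => [|[|[|k]]]; try by rewrite hWr.
all: case: hL => [eL | [eL hyz]]; rewrite /X eL /tabv /= ?dotpvv //.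
all: by rewrite dotpC.
Qed.

Lemma inline s (a b : vec s) : a \in <[b]>%VS -> a = 0 \/ a = b.
Proof.
case/vlineP => k ->; case: (F2_cases k) => ->; [left|right].
  by rewrite scale0r.
by rewrite scale1r.
Qed.

Lemma free2 s (a b : vec s) : a != 0 -> b != 0 -> a != b -> free [:: a; b].
Proof.
move=> a0 b0 ab; rewrite free_cons seq1_free b0 andbT span_seq1.
by apply/negP => /inline [/eqP | /eqP]; apply/negP.
Qed.

Lemma free3 s (a b c : vec s) : a != 0 -> b != 0 -> c != 0 ->
  a != b -> a != c -> b != c -> a + b + c != 0 -> free [:: a; b; c].
Proof.
move=> a0 b0 c0 ab ac bc abc.
rewrite free_cons free2 // andbT span_cons span_seq1.
apply/negP => /memv_addP [u /inline hu [v /inline hv ea]].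
move: ea; case: hu => ->; case: hv => ->; rewrite ?add0r ?addr0 => ea.
- by move/eqP: a0.
- by move/eqP: ac.
- by move/eqP: ab.
- by move/eqP: abc; rewrite ea -addrA vaddvv.
Qed.

Lemma annX s (T : {group {perm vec s}}) (HT : alt_trans T) (y z w c : vec s) :
  (Xv T <= <<[:: y; z; w]>>)%VS -> c \in Xv T ->
  dotp T c y = 0 -> dotp T c z = 0 -> dotp T c w = 0 -> c = 0.
Proof.
move=> hX cX hy hz hw.
have h : forall v, dotp T c v = 0.
  elim/(full_ind HT (y:=y) (z:=z) (w:=w)) => //.
  - by rewrite dotp0r.
  - by move=> a b ha hb; rewrite dotpDr // ha hb addr0.
  - by move=> a aW; rewrite Wv_ann.
have cW : c \in Wv T by apply: ann_Wv => x; rewrite dotpC.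
apply/eqP; rewrite -memv0 -(capv_compl (Wv T)) memv_cap cW.
exact: cX.
Qed.

Lemma dimX s (T : {group {perm vec s}}) :
  (3 <= s)%N -> dimsp (Wsp T) = (s - 3)%N -> \dim (Xv T) = 3.
Proof.
move=> s3 dW; rewrite /Xv dimv_compl dimvf_rV.
by rewrite /Wv -/(dimsp (Wsp T)) dW subKn.
Qed.

Lemma small s (T : {group {perm vec s}}) (y z w : vec s) :
  (Xv T <= <<[:: y; z; w]>>)%VS -> \dim (Xv T) = 3 ->
  (y \in <<[:: z; w]>>%VS) \/ (z \in <<[:: y; w]>>%VS) -> False.
Proof.
move=> hX dX hyz.
have hle : (\dim <<[:: y; z; w]>> <= 2)%N.
  case: hyz => h.
    apply: (leq_trans (dimvS (_ : (_ <= <<[:: z; w]>>)%VS))) (dim_span _).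
    apply/span_subvP => x; rewrite !inE => /or3P [/eqP -> | /eqP -> | /eqP ->] //;
      by apply: memv_span; rewrite !inE eqxx ?orbT.
  apply: (leq_trans (dimvS (_ : (_ <= <<[:: y; w]>>)%VS))) (dim_span _).
  apply/span_subvP => x; rewrite !inE => /or3P [/eqP -> | /eqP -> | /eqP ->] //;
    by apply: memv_span; rewrite !inE eqxx ?orbT.
by have := leq_trans (dimvS hX) hle; rewrite dX.
Qed.

Lemma r2case s (T : {group {perm vec s}}) (HT : alt_trans T) (y z w : vec s) :
  (Xv T <= <<[:: y; z; w]>>)%VS -> \dim (Xv T) = 3 ->
  y \in Xv T -> z \in Xv T -> dotp T y z = 0 ->
  free [:: dotp T y w; dotp T z w].
Proof.
move=> hX dX yX zX hyz.
apply: free2; apply/eqP => h.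
- have y0 := annX HT hX yX (dotpvv HT y) hyz h.
  by apply: (small hX dX); left; rewrite y0 mem0v.
- have z0 : z = 0.
    apply: (annX HT hX zX) => //; last by rewrite dotpvv.
    by rewrite dotpC.
  by apply: (small hX dX); right; rewrite z0 mem0v.
- have yz : y + z = 0.
    apply: (annX HT hX) => //; rewrite ?dotpDl ?h ?vaddvv ?dotpvv ?add0r ?addr0 //.
    + exact: memvD.
    + by rewrite dotpC.
  apply: (small hX dX); left; rewrite (vaddv_eq0 yz).
  by apply: memv_span; rewrite !inE eqxx.
Qed.

Lemma span_drop0 s (a b : vec s) : <<[:: a; b; 0%R]>>%VS = <<[:: a; b]>>%VS.
Proof.
apply: subv_anti; apply/andP; split; apply/span_subvP => x; rewrite !inE.
  by case/or3P => /eqP ->; rewrite ?mem0v //; apply: memv_span; rewrite !inE eqxx ?orbT.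
by case/orP => /eqP ->; apply: memv_span; rewrite !inE eqxx ?orbT.
Qed.

Lemma r2build s (T : {group {perm vec s}}) (HT : alt_trans T) (y z w : vec s) :
  (3 <= s)%N -> dimsp (Wsp T) = (s - 3)%N ->
  (Xv T <= <<[:: y; z; w]>>)%VS ->
  y \in Xv T -> z \in Xv T -> dotp T y z = 0 -> NFspec T.
Proof.
move=> s3 dW hX yX zX hyz.
apply: (build HT (y := y) (z := z) (w := w) (L := [:: dotp T y w; dotp T z w])) => //.
- by rewrite (gen_U HT hX) hyz span_drop0.
- by apply: (r2case HT hX (dimX s3 dW)).
- by right.
Qed.

Ltac inspan := apply: memv_span; by rewrite !inE eqxx ?orbT.

Lemma NF s (T : {group {perm vec s}}) (HT : alt_trans T) :
  (3 <= s)%N -> dimsp (Wsp T) = (s - 3)%N -> NFspec T.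
Proof.
move=> s3 dW; have dX := dimX s3 dW.
have [x0 [x1 [x2 exs]]] : exists a b c, (vbasis (Xv T) : seq _) = [:: a; b; c].
  have := size_tuple (vbasis (Xv T)); move: (tval _) => l; rewrite dX.
  by case: l => [|a [|b [|c [|]]]] //= _; exists a, b, c.
have spX : <<[:: x0; x1; x2]>>%VS = Xv T by rewrite -exs (span_basis (vbasisP _)).
have x0X : x0 \in Xv T by rewrite -spX; inspan.
have x1X : x1 \in Xv T by rewrite -spX; inspan.
have x2X : x2 \in Xv T by rewrite -spX; inspan.
have hXsub : forall y z w, x0 \in <<[:: y; z; w]>>%VS -> x1 \in <<[:: y; z; w]>>%VS ->
    x2 \in <<[:: y; z; w]>>%VS -> (Xv T <= <<[:: y; z; w]>>)%VS.
  move=> y z w h0 h1 h2; rewrite -spX; apply/span_subvP => x; rewrite !inE.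
  by case/or3P => /eqP ->.
case: (eqVneq (dotp T x0 x1) 0) => [h01 | n01].
  by apply: (r2build HT (y := x0) (z := x1) (w := x2) s3 dW) => //; apply: hXsub; inspan.
case: (eqVneq (dotp T x0 x2) 0) => [h02 | n02].
  by apply: (r2build HT (y := x0) (z := x2) (w := x1) s3 dW) => //; apply: hXsub; inspan.
case: (eqVneq (dotp T x1 x2) 0) => [h12 | n12].
  by apply: (r2build HT (y := x1) (z := x2) (w := x0) s3 dW) => //; apply: hXsub; inspan.
case: (eqVneq (dotp T x0 x2) (dotp T x1 x2)) => [e4 | n4].
  apply: (r2build HT (y := x0 + x1) (z := x2) (w := x0) s3 dW) => //.
  - apply: hXsub; try inspan.
    by rewrite -{1}[x1](vaddvK x0); apply: memvD; inspan.
  - exact: memvD.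
  - by rewrite dotpDl // e4 vaddvv.
case: (eqVneq (dotp T x0 x2) (dotp T x0 x1)) => [e5 | n5].
  apply: (r2build HT (y := x1 + x2) (z := x0) (w := x1) s3 dW) => //.
  - apply: hXsub; try inspan.
    by rewrite -{1}[x2](vaddvK x1); apply: memvD; inspan.
  - exact: memvD.
  - by rewrite dotpDl // (dotpC HT x1) (dotpC HT x2) e5 vaddvv.
case: (eqVneq (dotp T x1 x2) (dotp T x0 x1)) => [e6 | n6].
  apply: (r2build HT (y := x0 + x2) (z := x1) (w := x0) s3 dW) => //.
  - apply: hXsub; try inspan.
    by rewrite -{1}[x2](vaddvK x0); apply: memvD; inspan.
  - exact: memvD.
  - by rewrite dotpDl // (dotpC HT x2) e6 vaddvv.
case: (eqVneq (dotp T x0 x2 + dotp T x1 x2 + dotp T x0 x1) 0) => [e7 | n7].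
  apply: (r2build HT (y := x0 + x1) (z := x1 + x2) (w := x0) s3 dW) => //.
  - have h1 : x1 \in <<[:: (x0 + x1)%R; (x1 + x2)%R; x0]>>%VS.
      by rewrite -{1}[x1](vaddvK x0); apply: memvD; inspan.
    apply: hXsub => //; first by inspan.
    by rewrite -{1}[x2](vaddvK x1); apply: memvD => //; inspan.
  - exact: memvD.
  - exact: memvD.
  - rewrite !dotpDl // !dotpDr // dotpvv // add0r -e7.
    by apply/rowP => j; rewrite !mxE; ring.
apply: (build HT (y := x0) (z := x1) (w := x2)
          (L := [:: dotp T x0 x2; dotp T x1 x2; dotp T x0 x1])) => //.
- by rewrite spX.
- by rewrite (@gen_U _ _ HT x0 x1 x2) ?spX.
- exact: free3.
- by left.
Qed.


Lemma add_ext s (f h : vec s -> vec s) (E : 'M['F_2]_s) :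
  (forall a b, f (a + b) = f a + f b) -> (forall a b, h (a + b) = h a + h b) ->
  (forall i : 'I_s, f (row i E) = h (row i E)) ->
  forall u : 'rV_s, f (u *m E) = h (u *m E).
Proof.
move=> fD hD hE u.
have f0 : f 0 = 0 by apply: (@addrI _ (f 0)); rewrite -fD !addr0.
have h0 : h 0 = 0 by apply: (@addrI _ (h 0)); rewrite -hD !addr0.
have fs c x : f (c *: x) = c *: f x.
  by case: (F2_cases c) => ->; rewrite ?scale0r ?scale1r.
have hs c x : h (c *: x) = c *: h x.
  by case: (F2_cases c) => ->; rewrite ?scale0r ?scale1r.
rewrite mulmx_sum_row (big_morph f fD f0) (big_morph h hD h0).
by apply: eq_bigr => i _; rewrite fs hs hE.
Qed.

Lemma unit_span s (E : 'M['F_2]_s) :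
  (forall x, exists u : 'rV_s, x = u *m E) -> E \in unitmx.
Proof.
move=> hE; rewrite -row_full_unit -sub1mx; apply/row_subP => i.
have [u hu] := hE (row i 1%:M); apply/submxP; by exists u.
Qed.

Lemma bwd_conj s (Tc Td : {group {perm vec s}}) (g : 'M['F_2]_s) :
  alt_trans Tc -> alt_trans Td -> g \in unitmx ->
  (forall x y, dotp Tc (x *m g) (y *m g) = dotp Td x y *m g) ->
  (Td : {set _}) = conjT g Tc.
Proof.
move=> Hc Hd gu hm; apply/setP => p; rewrite inE; apply/idP/existsP.
  move=> pT; exists (tau Tc (p 0 *m g)); rewrite (tauP Hc _).1 /=.
  apply/forallP => x; apply/eqP.
  rewrite {1}(tau_uniq Hd pT) !tauE hm -!mulmxDl mulmxK //.
case=> t /andP [tT /forallP ht].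
have [b tb] : exists b, t = tau Tc b by exists (t 0); apply: tau_uniq.
have t0 : t 0 = b by rewrite tb (tauP Hc b).2.
have -> : p = tau Td (b *m invmx g); last by rewrite (tauP Hd _).1.
apply/permP => x; rewrite (eqP (ht x)) tb (tauE Tc b) (tauE Td).
rewrite -{1 2}[b](mulmxKV gu) hm -!mulmxDl mulmxK //.
Qed.

Lemma bwd s (Tc Td : {group {perm vec s}}) :
  (3 <= s)%N -> alt_trans Tc -> alt_trans Td ->
  dimsp (Wsp Tc) = (s - 3)%N -> dimsp (Wsp Td) = (s - 3)%N ->
  dimsp (Usp Tc) = dimsp (Usp Td) ->
  exists2 g : 'M['F_2]_s, g \in unitmx & (Td : {set {perm vec s}}) = conjT g Tc.
Proof.
move=> s3 Hc Hd dWc dWd dU.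
have [ec [ec0 ecS ecT]] := NF Hc s3 dWc.
have [ed [ed0 edS edT]] := NF Hd s3 dWd.
set Ec := \matrix_(j < s) ec j; set Ed := \matrix_(j < s) ed j.
have Ecu : Ec \in unitmx by apply: unit_span.
have Edu : Ed \in unitmx by apply: unit_span.
pose g := invmx Ed *m Ec.
have gu : g \in unitmx by rewrite unitmx_mul unitmx_inv Edu Ecu.
have key : forall j, ed j *m g = ec j.
  move=> j; case: (ltnP j s) => hj; last by rewrite ed0 // ec0 // mul0mx.
  have -> : ed j = row (Ordinal hj) Ed by rewrite rowK.
  have -> : ec j = row (Ordinal hj) Ec by rewrite rowK.
  by rewrite /g rowE mulmxA mulmxK // -rowE.
have keyt : forall i k, tabv (dimsp (Usp Td)) ed i k *m g = tabv (dimsp (Usp Tc)) ec i k.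
  by move=> i k; rewrite /tabv dU; case: (tab _ i k) => [j|]; rewrite ?key ?mul0mx.
exists g => //; apply: bwd_conj => // x y.
have [u ->] := edS x; have [v ->] := edS y.
pose f1 a := dotp Tc (a *m g) (v *m Ed *m g).
pose h1 a := dotp Td a (v *m Ed) *m g.
apply: (add_ext (f := f1) (h := h1)).
- by move=> a b; rewrite /f1 mulmxDl dotpDl.
- by move=> a b; rewrite /h1 dotpDl // mulmxDl.
move=> i; rewrite /f1 /h1 rowK.
pose f2 b := dotp Tc (ed i *m g) (b *m g).
pose h2 b := dotp Td (ed i) b *m g.
apply: (add_ext (f := f2) (h := h2)).
- by move=> a b; rewrite /f2 mulmxDl dotpDr.
- by move=> a b; rewrite /h2 dotpDr // mulmxDl.
move=> k; rewrite /f2 /h2 rowK !key ecT edT.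
by rewrite keyt.
Qed.

Unset Implicit Arguments.
Theorem theorem7 (s : nat) (Tc Td : {group {perm vec s}}) :
  (3 <= s)%N ->
  alt_trans Tc -> alt_trans Td ->
  dimsp (Wsp Tc) = (s - 3)%N -> dimsp (Wsp Td) = (s - 3)%N ->
  (exists2 g : 'M['F_2]_s, g \in unitmx & (Td : {set {perm vec s}}) = conjT g Tc)
  <-> dimsp (Usp Tc) = dimsp (Usp Td).
Proof.
move=> s3 Hc Hd dWc dWd; split.
  by case=> g gu eT; apply: fwd gu eT.
exact: bwd.
Qed.
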